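(* Let $M$ be a matroid on a finite set $E$ with $r(M)>0$. Then $F(M)$ is a partition of $\cup\mathcal{B}(M)$ if and only if $M$ is a unique expansion matroid.
   Context: A matroid $M=(E,\mathcal{I})$ has independent sets $\mathcal{I}(M)$; $\mathcal{B}(M)$ denotes its family of bases (maximal independent sets), $r(M)$ the common cardinality of its bases, and $r(X)$ the rank of $X\subseteq E$ (maximum size of an independent subset of $X$). For a set family $S$, $\cup S=\bigcup_{X\in S}X$. A partition of a set $U$ is a family of nonempty, pairwise disjoint subsets of $U$ whose union is $U$. For $r(M)>0$: the secondary base family is $s(M)=\{A\in\mathcal{I}(M): |A|=r(M)-1\}$; for $X\subseteq E$, $K_M(X)=\{a\in E: r(X\cup\{a\})=r(X)+1\}$; the forming base family is $F(M)=\{K_M(X): X\in s(M)\}$. $M$ is a unique expansion matroid if for every $B\in\mathcal{B}(M)$ and every $A\in s(M)$, whenever $e_1,e_2\in B$ satisfy $A\cup\{e_1\}\in\mathcal{B}(M)$ and $A\cup\{e_2\}\in\mathcal{B}(M)$, then $e_1=e_2$. *)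

(* Defs.v *)
From mathcomp Require Import all_boot.
Set Implicit Arguments. Unset Strict Implicit. Unset Printing Implicit Defensive.

Section Matroid.
Variable E : finType.
Implicit Types (I : {set {set E}}) (X A B : {set E}).

Definition is_matroid I : Prop :=
  [/\ set0 \in I,
      (forall A B, B \in I -> A \subset B -> A \in I) &
      (forall A B, A \in I -> B \in I -> #|A| < #|B| ->
         exists2 e, e \in B :\: A & e |: A \in I)].

Definition rk I X : nat := \max_(A in I | A \subset X) #|A|.

Definition rM I : nat := rk I setT.

Definition bases I : {set {set E}} := [set B | maxset (mem I) B].

Definition sec I : {set {set E}} := [set A in I | #|A| == (rM I).-1].

Definition KM I X : {set E} := [set a | rk I (a |: X) == (rk I X).+1].

Definition Fam I : {set {set E}} := [set KM I X | X in sec I].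

Definition unique_expansion I : Prop :=
  forall B A e1 e2, B \in bases I -> A \in sec I ->
    e1 \in B -> e2 \in B ->
    A :|: [set e1] \in bases I -> A :|: [set e2] \in bases I -> e1 = e2.

End Matroid.

(* Main.v *)
Require Import Defs.
From mathcomp Require Import all_boot zify.
Set Implicit Arguments. Unset Strict Implicit. Unset Printing Implicit Defensive.

Section H.
Variable E : finType.
Variable I : {set {set E}}.
Hypothesis HM : is_matroid I.

Lemma i0 : set0 \in I. Proof. by case: HM. Qed.
Lemma isub (A B : {set E}) : B \in I -> A \subset B -> A \in I. Proof. by case: HM => _ h _; apply: h. Qed.
Lemma iaug (A B : {set E}) : A \in I -> B \in I -> #|A| < #|B| ->
         exists2 e, e \in B :\: A & e |: A \in I.
Proof. by case: HM => _ _ h; apply: h. Qed.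

Lemma rk_le (A X : {set E}) : A \in I -> A \subset X -> #|A| <= rk I X.
Proof. by move=> h1 h2; rewrite /rk; apply: (leq_bigmax_cond A); rewrite h1 h2. Qed.

Lemma rk_ex (X : {set E}) : exists A, [/\ A \in I, A \subset X & #|A| = rk I X].
Proof.
rewrite /rk (@bigmax_eq_arg _ set0); last by rewrite i0 sub0set.
case: arg_maxnP; first by rewrite i0 sub0set.
move=> A /andP[h1 h2] _; by exists A.
Qed.

Lemma ind_le (A : {set E}) : A \in I -> #|A| <= rM I.
Proof. by move=> h; apply: rk_le => //; apply: subsetT. Qed.

Lemma rM_ex : exists2 T, T \in I & #|T| = rM I.
Proof. by case: (rk_ex setT) => T [h1 _ h3]; exists T. Qed.

Lemma extend n (S T : {set E}) : S \in I -> T \in I -> #|S| + n = #|T| ->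
  exists S' : {set E}, [/\ S \subset S', S' \subset S :|: T, S' \in I & #|S'| = #|T|].
Proof.
elim: n S => [|n IH] S hS hT hc.
  exists S; split => //; first exact: subsetUl. by rewrite -hc addn0.
have [e he heS] : exists2 e, e \in T :\: S & e |: S \in I by apply: iaug => //; lia.
move: he; rewrite in_setD => /andP[eS eT].
have := IH (e |: S) heS hT; rewrite cardsU1 eS /=.
case=> [|S' [h1 h2 h3 h4]]; first lia.
exists S'; split => //.
- by apply: subset_trans h1; apply: subsetUr.
- apply: (subset_trans h2); apply/subsetP => x; rewrite !in_setU in_set1.
  by case/orP=> [/orP[/eqP->|->]|->]; rewrite ?eT ?orbT.
Qed.

Lemma baseP (B : {set E}) : (B \in bases I) = (B \in I) && (#|B| == rM I).
Proof.
rewrite /bases inE; apply/maxsetP/andP.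
- case=> h1 h2; split => //; rewrite eqn_leq ind_le //=.
  case: rM_ex => T hT hTc; rewrite leqNgt; apply/negP => hlt.
  have := iaug h1 hT; rewrite hTc => /(_ hlt) [e he heB].
  move: he; rewrite in_setD => /andP[eB _].
  have := h2 _ heB (subsetUr _ _); move/setP/(_ e) => h.
  by rewrite setU11 in h; rewrite -h in eB.
- case=> h1 /eqP h2; split => // C hC hBC; apply/eqP; rewrite eq_sym eqEcard hBC /=.
  by rewrite h2 ind_le.
Qed.

Lemma rk_ind (A : {set E}) : A \in I -> rk I A = #|A|.
Proof.
move=> h; apply/eqP; rewrite eqn_leq rk_le // andbT.
by case: (rk_ex A) => B [_ hB <-]; apply: subset_leq_card.
Qed.

Lemma secP (X : {set E}) : (X \in sec I) = (X \in I) && (#|X| == (rM I).-1).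
Proof. by rewrite /sec inE. Qed.

Lemma KMP (X : {set E}) a : 0 < rM I -> X \in sec I ->
  (a \in KM I X) = (a \notin X) && (a |: X \in I).
Proof.
move=> r0; rewrite secP => /andP[hX /eqP hc].
rewrite /KM inE (rk_ind hX) hc prednK //.
apply/idP/andP.
- move/eqP=> hr; case: (rk_ex (a |: X)) => A [hA hsub hAc].
  have hle : #|a |: X| <= #|X|.+1 by rewrite cardsU1; case: (a \notin X).
  have hEq : A == a |: X by rewrite eqEcard hsub /= hAc hr; lia.
  move/eqP: hEq => hEq; subst A.
  split => //; move: hAc; rewrite hr cardsU1; case: (a \notin X) => //=; lia.
- case=> ha hI; rewrite rk_ind // cardsU1 ha hc; apply/eqP; lia.
Qed.

Lemma base_add (X : {set E}) a : X \in sec I -> (X :|: [set a] \in bases I) = (a |: X \in bases I).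
Proof. by rewrite setUC. Qed.

Lemma baseU1 (X : {set E}) a : 0 < rM I -> X \in sec I ->
  (a |: X \in bases I) = (a \in KM I X).
Proof.
move=> r0 hX; rewrite KMP // baseP.
move: hX; rewrite secP => /andP[_ /eqP hc].
rewrite cardsU1 hc; case: (a \notin X); rewrite /= ?andbT ?andbF //.
  by apply/eqP; lia.
apply/andP => -[_ /eqP]; lia.
Qed.

Hypothesis r0 : 0 < rM I.

Lemma secX (X : {set E}) : X \in sec I -> X \in I /\ #|X| = (rM I).-1.
Proof. by rewrite secP => /andP[? /eqP]. Qed.

Lemma KMX (X : {set E}) a : X \in sec I -> a \in KM I X ->
  [/\ a \notin X, a |: X \in I & #|a |: X| = rM I].
Proof.
move=> hX ha; have := ha; rewrite KMP // => /andP[h1 h2].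
have := ha; rewrite -baseU1 // baseP => /andP[_ /eqP]; done.
Qed.

Lemma sub_KM (X Y : {set E}) a : unique_expansion I -> X \in sec I -> Y \in sec I ->
  a \in KM I X -> a \in KM I Y -> KM I X \subset KM I Y.
Proof.
move=> UE hX hY haX haY; apply/subsetP => b hbX.
have [->//|hba] := eqVneq b a.
have [aX aXI aXc] := KMX hX haX.
have [aY aYI aYc] := KMX hY haY.
have hnab : [set a; b] \notin I.
  apply/negP => hab.
  have h2 : #|[set a; b]| = 2 by rewrite cards2 eq_sym hba.
  have := ind_le hab; rewrite h2 => hr.
  have hcc : #|[set a; b]| + (rM I - 2) = #|a |: X| by rewrite h2 aXc; lia.
  have [S' [h1 h3 h4 h5]] := extend hab aXI hcc.
  have hS'b : S' \in bases I by rewrite baseP h4 h5 aXc eqxx.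
  move/subsetP: h1 => h1.
  have := UE S' X a b hS'b hX (h1 _ (set21 _ _)) (h1 _ (set22 _ _)).
  rewrite !base_add // !baseU1 // => /(_ haX hbX) hab'.
  by rewrite hab' eqxx in hba.
have bY : b \notin Y.
  apply/negP => bY; move/negP: hnab; apply; apply: (isub aYI).
  by apply/subsetP => x; rewrite !inE => /orP[/eqP->|/eqP->]; rewrite ?eqxx ?bY ?orbT.
have [_ hbXI _] := KMX hX hbX.
have hb1 : [set b] \in I by apply: (isub hbXI); rewrite sub1set setU11.
have hcc : #|[set b]| + (rM I - 1) = #|a |: Y| by rewrite cards1 aYc subnKC.
have [S' [h1 h3 h4 h5]] := extend hb1 aYI hcc.
have aS' : a \notin S'.
  apply/negP => aS'; move/negP: hnab; apply; apply: (isub h4).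
  by apply/subsetP => x; rewrite !inE => /orP[/eqP->|/eqP->] //; rewrite -sub1set.
have hsub : S' \subset b |: Y.
  apply/subsetP => x xS; move/subsetP: h3 => /(_ x xS); rewrite !inE.
  case/orP=> [->//|/orP[/eqP hx|->]]; last by rewrite orbT.
  by subst x; rewrite xS in aS'.
have hE : S' == b |: Y by rewrite eqEcard hsub h5 aYc cardsU1 bY (secX hY).2 /= add1n prednK.
move/eqP: hE => hE; subst S'.
by rewrite KMP // bY h4.
Qed.

End H.

Theorem theorem4 (E : finType) (I : {set {set E}}) :
  is_matroid I -> 0 < rM I ->
  (partition (Fam I) (cover (bases I)) <-> unique_expansion I).
Proof.
move=> HM r0.
have hcov : cover (Fam I) = cover (bases I).
  apply/setP => x; apply/bigcupP/bigcupP.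
  - case=> K /imsetP[X hX ->] hx; exists (x |: X) => //; last exact: setU11.
    by rewrite baseU1.
  - case=> B hB hx; exists (KM I (B :\ x)); first apply: imset_f.
    + move: hB; rewrite baseP // secP // => /andP[hBI /eqP hc].
      rewrite (isub HM hBI (subsetDl _ _)) /=.
      by rewrite (cardsD1 x B) hx in hc; rewrite -hc.
    + rewrite -baseU1 //; last first.
        move: hB; rewrite baseP // secP // => /andP[hBI /eqP hc].
        rewrite (isub HM hBI (subsetDl _ _)) /=.
        by rewrite (cardsD1 x B) hx in hc; rewrite -hc.
      by rewrite setD1K.
have h0 : set0 \notin Fam I.
  apply/imsetP => -[X hX hXe].
  have [hXI hXc] := secX hX.
  case: (rM_ex HM) => T hT hTc.
  have := iaug HM hXI hT; rewrite hTc hXc prednK // => /(_ (leqnn _)) [e heT he].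
  have : e \in KM I X by rewrite KMP // he andbT; move: heT; rewrite in_setD => /andP[].
  by rewrite -hXe inE.
have hpart : partition (Fam I) (cover (bases I)) <-> trivIset (Fam I).
  by rewrite /partition hcov eqxx h0 andbT.
rewrite hpart; split.
- move=> hT B A e1 e2 hB hA he1 he2.
  rewrite !base_add // !baseU1 // => hk1 hk2.
  case: (eqVneq e1 e2) => // hne.
  have hX : B :\ e1 \in sec I.
    move: hB; rewrite baseP // secP // => /andP[hBI /eqP hc].
    rewrite (isub HM hBI (subsetDl _ _)) /=.
    by rewrite (cardsD1 e1 B) he1 in hc; rewrite -hc.
  have hk : e1 \in KM I (B :\ e1) by rewrite -baseU1 // setD1K.
  have hEq : KM I (B :\ e1) = KM I A.
    apply/eqP; case: eqVneq => // hn.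
    move/trivIsetP: hT => /(_ _ _ (imset_f _ hX) (imset_f _ hA) hn).
    rewrite -setI_eq0 => /eqP/setP/(_ e1); rewrite inE hk hk1 inE.
    done.
  move: hk2; rewrite -hEq KMP // => /andP[]; by rewrite !inE eq_sym hne he2.
- move=> UE; apply/trivIsetP => K1 K2 /imsetP[X hX ->] /imsetP[Y hY ->] hne.
  apply: contraR hne => hnd; rewrite -setI_eq0 in hnd.
  case/set0Pn: hnd => a; rewrite inE => /andP[haX haY].
  by rewrite eqEsubset (sub_KM HM r0 UE hX hY haX haY) (sub_KM HM r0 UE hY hX haY haX).
Qed.
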